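(* Let $\sigma=(a_1,\ldots,a_s)$ be a partition of $r$ with $a_1\ge a_2\ge\cdots\ge a_s\ge1$ and let $H=H(n,r,q\mid\sigma)$ have classes $V_1,\ldots,V_n$. Let $B\subseteq V(H)$, let $B_i=B\cap V_i$ and $b_i=|B_i|$, where the classes are labelled so that $b_1\ge b_2\ge\cdots\ge b_n$. Let $E^*$ be an edge of $H$ such that for each $1\le i\le s$ the set $A_i=E^*\cap V_i$ has $|A_i|=a_i$, with $A_i\subseteq B_i$ when $a_i<b_i$ and $B_i\subseteq A_i$ when $a_i\ge b_i$. Then \[|E^*\cap B|=\max\{|E\cap B| : E\in E(H)\}.\]
   Context: A $\sigma$-hypergraph $H=H(n,r,q\mid\sigma)$, for a partition $\sigma=(a_1,\ldots,a_s)$ of $r$, is the $r$-uniform hypergraph whose vertex set is the disjoint union of $n$ classes $V_1,\ldots,V_n$, each of size $q$; an $r$-subset $K$ of vertices is an edge iff the multiset of non-zero values $|K\cap V_i|$ ($1\le i\le n$) equals $\sigma$. $E(H)$ denotes the edge set. *)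

(* Defs.v *)
From mathcomp Require Import all_boot.
Set Implicit Arguments. Unset Strict Implicit. Unset Printing Implicit Defensive.

(* Vertices of H(n,r,q|sigma): pairs (i, x) with i : 'I_n the class index
   (class V_{i+1}) and x : 'I_q the position inside the class. *)
Definition vtx (n q : nat) := ('I_n * 'I_q)%type.

Definition cls (n q : nat) (K : {set vtx n q}) (i : 'I_n) : {set vtx n q} :=
  [set v in K | v.1 == i].

Definition is_partition (r : nat) (sigma : seq nat) : Prop :=
  sumn sigma = r /\ all (fun a => 0 < a) sigma /\ sorted geq sigma.

Definition is_edge (n r q : nat) (sigma : seq nat) (K : {set vtx n q}) : bool :=
  (#|K| == r) &&
  perm_eq [seq k <- [seq #|cls K i| | i <- enum 'I_n] | k != 0] sigma.

(* Main.v *)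
Require Import Defs.
From mathcomp Require Import all_boot.
From mathcomp Require Import zify.

Lemma cs n (P : pred 'I_n) : #|[set i | P i]| = count P (enum 'I_n).
Proof.
rewrite cardsE cardE /enum_mem size_filter /= -enumT count_filter.
by apply: eq_count => i; rewrite /= andbT.
Qed.

Lemma sum_lt (m N : nat) : \sum_(t < N) nat_of_bool (t < m) = minn m N.
Proof.
elim: N => [|N IH]; first by rewrite big_ord0 minn0.
rewrite big_ord_recr /= IH; case: (ltnP N m) => h /=; lia.
Qed.

Lemma min_thr (x y N : nat) : x <= N -> y <= N ->
  minn x y = \sum_(t < N) nat_of_bool ((t < x) && (t < y)).
Proof.
move=> hx hy.
rewrite (eq_bigr (fun t : 'I_N => nat_of_bool (t < minn x y))); last first.
  by move=> t _; rewrite leq_min.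
rewrite sum_lt; lia.
Qed.

Lemma sum_ind n (P : pred 'I_n) : \sum_i nat_of_bool (P i) = #|[set i | P i]|.
Proof.
rewrite cardsE -sum1_card [RHS]big_mkcond /=.
by apply: eq_bigr => i _; rewrite unfold_in; case: (P i).
Qed.

Lemma prefixI n (f g : 'I_n -> nat) t :
  (forall i j : 'I_n, i <= j -> f j <= f i) ->
  (forall i j : 'I_n, i <= j -> g j <= g i) ->
  #|[set i | t < f i] :&: [set i | t < g i]| =
  minn #|[set i | t < f i]| #|[set i | t < g i]|.
Proof.
move=> hf hg.
set A := [set i | t < f i]; set C := [set i | t < g i].
have: (A \subset C) || (C \subset A).
  case/boolP: (A \subset C) => // /subsetPn [i hi hni] /=.
  apply/subsetP => j hj; apply/negPn/negP => hnj.
  move: hi hni hj hnj; rewrite !inE -!ltnNge => hi hni hj hnj.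
  case: (leqP i j) => hij.
    by have := hg _ _ hij; lia.
  by have := hf _ _ (ltnW hij); lia.
case/orP => h.
  by rewrite (setIidPl h); apply/esym/minn_idPl/subset_leq_card.
by rewrite (setIidPr h); apply/esym/minn_idPr/subset_leq_card.
Qed.

Lemma card_split n q (A : {set vtx n q}) : #|A| = \sum_(i < n) #|cls A i|.
Proof.
rewrite -sum1_card (partition_big (fun v : vtx n q => v.1) xpredT) //=.
apply: eq_bigr => i _; rewrite -sum1_card.
by apply: eq_bigl => v; rewrite !inE.
Qed.

Lemma clsI n q (K B : {set vtx n q}) i : cls (K :&: B) i = cls K i :&: cls B i.
Proof. by apply/setP => v; rewrite !inE andbACA andbb. Qed.

Lemma edge_count n r q sigma (E : {set vtx n q}) t :
  is_edge r sigma E ->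
  #|[set i | t < #|cls E i|]| = count (fun k => t < k) sigma.
Proof.
case/andP => _ hp.
rewrite cs -(count_map (fun i => #|cls E i|) (fun k => t < k)).
rewrite -(permP hp) count_filter.
apply: eq_count => k /=; case: k => [|k] //=; by rewrite andbT.
Qed.

Lemma nth_count n sigma t : size sigma <= n ->
  #|[set i : 'I_n | t < nth 0 sigma i]| = count (fun k => t < k) sigma.
Proof.
move=> hs.
rewrite cs -(count_map (fun i : 'I_n => nth 0 sigma i) (fun k => t < k)).
have -> : [seq nth 0 sigma i | i : 'I_n <- enum 'I_n] =
          [seq nth 0 sigma i | i <- iota 0 n].
  by rewrite -val_enum_ord -map_comp.
rewrite -(subnKC hs) iotaD map_cat count_cat.
have -> : [seq nth 0 sigma i | i <- iota 0 (size sigma)] = sigma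
  by exact: (mkseq_nth 0 sigma).
rewrite -[RHS]addn0; congr (_ + _).
rewrite count_map; apply/eqP; rewrite -leqn0 leqNgt -has_count.
apply/hasPn => i; rewrite mem_iota => /andP [hi _] /=.
by rewrite nth_default.
Qed.

Theorem lemma2p4 (n r q : nat) (sigma : seq nat)
  (Hsigma : is_partition r sigma)
  (B : {set vtx n q})
  (Hb : forall i j : 'I_n, i <= j -> #|cls B j| <= #|cls B i|)
  (Estar : {set vtx n q})
  (HE : is_edge r sigma Estar)
  (HA : forall i : 'I_n, i < size sigma ->
     #|cls Estar i| = nth 0 sigma i /\
     (if nth 0 sigma i < #|cls B i| then cls Estar i \subset cls B i
      else cls B i \subset cls Estar i)) :
  #|Estar :&: B| = \max_(E : {set vtx n q} | is_edge r sigma E) #|E :&: B|.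
Proof.
set N := #|[set: vtx n q]|.
have hs : size sigma <= n.
  move: HE => /andP [_ /perm_size <-].
  by rewrite size_filter (leq_trans (count_size _ _)) // size_map size_enum_ord.
set b := fun i : 'I_n => #|cls B i|.
set a := fun i : 'I_n => nth 0 sigma i.
have ha : forall i j : 'I_n, i <= j -> a j <= a i.
  move=> i j hij; rewrite /a.
  case: (ltnP j (size sigma)) => hj; last by rewrite (nth_default 0 hj).
  have := (sorted_leq_nth (leT := geq) _ _ 0 (proj2 (proj2 Hsigma))).
  apply => //; first by move=> x y z /= h1 h2; apply: leq_trans h2 h1.
  all: try by rewrite inE; apply: leq_ltn_trans hj.
  by move=> x /=.
have aN : forall i, a i <= N.
  move=> i; case: (ltnP i (size sigma)) => hi.
    by rewrite /a -(proj1 (HA i hi)) (subset_leq_card (subsetT _)).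
  by rewrite /a nth_default.
set Phi := \sum_(t < N) minn (count (fun k => t < k) sigma) #|[set i | t < b i]|.
have up : forall E, is_edge r sigma E -> #|E :&: B| <= Phi.
  move=> E hE.
  rewrite card_split.
  apply: (@leq_trans (\sum_(i < n) minn #|cls E i| (b i))).
    apply: leq_sum => i _; rewrite clsI leq_min.
    by rewrite !subset_leq_card // ?subsetIl ?subsetIr.
  rewrite (eq_bigr (fun i : 'I_n => \sum_(t < N)
      nat_of_bool ((t < #|cls E i|) && (t < b i)))); last first.
    by move=> i _; apply: min_thr; apply: (subset_leq_card (subsetT _)).
  rewrite exchange_big /Phi; apply: leq_sum => t _.
  rewrite sum_ind -(@edge_count _ _ _ _ _ t hE) leq_min.
  rewrite !subset_leq_card //; apply/subsetP => i; rewrite !inE => /andP [] //.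
have low : Phi <= #|Estar :&: B|.
  rewrite card_split.
  apply: (@leq_trans (\sum_(i < n) minn (a i) (b i))); last first.
    apply: leq_sum => i _; rewrite clsI.
    case: (ltnP i (size sigma)) => hi; last by rewrite /a (nth_default 0 hi) min0n.
    have [h1 h2] := HA i hi; move: h2; rewrite /a /b.
    case: ifP => hab hsub.
      by rewrite (setIidPl hsub) h1 geq_minl.
    by rewrite (setIidPr hsub) geq_minr.
  rewrite (eq_bigr (fun i : 'I_n => \sum_(t < N)
      nat_of_bool ((t < a i) && (t < b i)))); last first.
    by move=> i _; apply: min_thr => //; apply: (subset_leq_card (subsetT _)).
  rewrite exchange_big /Phi; apply: leq_sum => t _.
  rewrite sum_ind -(@nth_count _ _ t hs).
  have -> : [set i | (t < a i) && (t < b i)] =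
            [set i | t < a i] :&: [set i | t < b i].
    by apply/setP => i; rewrite !inE.
  by rewrite prefixI.
apply/eqP; rewrite eqn_leq; apply/andP; split.
  by apply: (@leq_bigmax_cond _ (fun E => is_edge r sigma E) (fun E => #|E :&: B|) Estar).
apply/bigmax_leqP => E hE.
exact: leq_trans (up E hE) low.
Qed.
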